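(* For every positive integer $n$, the class $\mathcal K_n^*$ has the Ramsey property.
   Context: For relational structures $\mathbf A,\mathbf B$ in the same language, $\binom{\mathbf B}{\mathbf A}$ denotes the set of substructures of $\mathbf B$ isomorphic to $\mathbf A$. For $k\ge 1$, $\mathbf C\to(\mathbf B)^{\mathbf A}_k$ means: for every map $c:\binom{\mathbf C}{\mathbf A}\to[k]=\{0,\dots,k-1\}$ there is $\mathbf B'\in\binom{\mathbf C}{\mathbf B}$ such that $c$ is constant on $\binom{\mathbf B'}{\mathbf A}$. A class $\mathcal K$ of finite structures has the Ramsey property if for all $k\ge1$ and all $\mathbf A,\mathbf B\in\mathcal K$ there is $\mathbf C\in\mathcal K$ with $\mathbf C\to(\mathbf B)^{\mathbf A}_k$. A directed graph $(A,E)$ ($E$ irreflexive and asymmetric) is complete multipartite if the relation ''$u=v$, or neither $E(u,v)$ nor $E(v,u)$'' is an equivalence relation on $A$; its classes are called the parts (so any two vertices in different parts are joined by exactly one directed edge, and there are no edges inside a part). $\mathcal K_n^*$ is the class of finite structures $(A,E,P_0,\dots,P_{n-1},<)$ such that $(A,E)$ is a complete multipartite directed graph with at most $n$ parts, $P_0,\dots,P_{n-1}$ are pairwise disjoint subsets of $A$ each of which is either empty or a part, every part equals some $P_i$, and $<$ is a linear order on $A$ such that every element of $P_i$ is below every element of $P_j$ whenever $i<j$. (This is the age of the expansion $n*I_\omega^*$ of the generic complete $n$-partite directed graph by unary predicates naming the parts and a convex linear order.) *)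

(* Defs.v *)
From mathcomp Require Import all_boot.
Set Implicit Arguments. Unset Strict Implicit. Unset Printing Implicit Defensive.

Record str (n : nat) := Str {
  car : finType;
  E : rel car;
  P : 'I_n -> pred car;
  lt : rel car }.

Arguments E {n} s.
Arguments P {n} s.
Arguments lt {n} s.

Definition nonadj n (A : str n) (u v : car A) : bool :=
  (u == v) || (~~ E A u v && ~~ E A v u).

(* the part (equivalence class of nonadj) containing x, as a predicate *)
Definition part_eq n (A : str n) (X : pred (car A)) (x : car A) : Prop :=
  forall y, X y = nonadj x y.

Definition inK n (A : str n) : Prop :=
  (forall x, ~~ E A x x) /\ (forall x y, E A x y -> ~~ E A y x) /\
  (* complete multipartite: nonadj is an equivalence relation *)
  (forall x : car A, nonadj x x) /\ (forall x y : car A, nonadj x y = nonadj y x) /\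
  (forall x y z : car A, nonadj x y -> nonadj y z -> nonadj x z) /\
  (forall (i j : 'I_n) x, i != j -> P A i x -> ~~ P A j x) /\
  (forall i : 'I_n, (forall x, ~~ P A i x) \/ exists x, part_eq (P A i) x) /\
  (* every part equals some P_i (hence at most n parts) *)
  (forall x, exists i : 'I_n, part_eq (P A i) x) /\
  (forall x, ~~ lt A x x) /\
  (forall x y z, lt A x y -> lt A y z -> lt A x z) /\
  (forall x y, x != y -> lt A x y || lt A y x) /\
  (forall (i j : 'I_n) x y, (i < j)%N -> P A i x -> P A j y -> lt A x y).

Definition is_emb n (A B : str n) (f : car A -> car B) : Prop :=
  injective f /\
  (forall x y, E B (f x) (f y) = E A x y) /\
  (forall i x, P B i (f x) = P A i x) /\
  (forall x y, lt B (f x) (f y) = lt A x y).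

(* S is (the universe of) a member of binom(C, A) *)
Definition copy n (C A : str n) (S : {set car C}) : Prop :=
  exists f : car A -> car C, is_emb f /\ f @: setT = S.

Definition arrow n (C B A : str n) (k : nat) : Prop :=
  forall c : {set car C} -> 'I_k,
    exists S' : {set car C}, copy B S' /\
      exists col : 'I_k, forall S : {set car C},
        S \subset S' -> copy A S -> c S = col.

Definition ramsey_property n (K : str n -> Prop) : Prop :=
  forall k : nat, (0 < k)%N -> forall A B : str n, K A -> K B ->
    exists C : str n, K C /\ arrow C B A k.

(* Main.v *)
Require Import Defs.
From mathcomp Require Import all_boot.
Set Implicit Arguments. Unset Strict Implicit. Unset Printing Implicit Defensive.

Definition sto (T : finType) (lt : rel T) :=
  [/\ irreflexive lt, transitive lt & forall x y, x != y -> lt x y || lt y x].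

Section Rank.
Variables (T : finType) (lt : rel T).
Hypothesis Hlt : sto lt.

Definition rk (S : {set T}) x := #|[set y in S | lt y x]|.

Lemma rk_lt (S : {set T}) x y : x \in S -> lt x y -> rk S x < rk S y.
Proof.
case: Hlt => irr tr _ xS xy; apply: proper_card; apply/properP; split.
  by apply/subsetP=> z; rewrite !inE => /andP[-> zx]; rewrite (tr _ _ _ zx xy).
by exists x; rewrite !inE ?xS ?xy ?irr.
Qed.

Lemma rk_inj (S : {set T}) : {in S &, injective (rk S)}.
Proof.
move=> x y xS yS e; apply/eqP; apply/negPn/negP => nxy.
case: Hlt => _ _ tot; case/orP: (tot _ _ nxy) => h.
  by move: (rk_lt xS h); rewrite e ltnn.
by move: (rk_lt yS h); rewrite e ltnn.
Qed.

Lemma rk_bound (S : {set T}) x : x \in S -> rk S x < #|S|.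
Proof.
case: Hlt => irr _ _ xS; apply: proper_card; apply/properP; split.
  by apply/subsetP=> z; rewrite !inE => /andP[].
by exists x => //; rewrite !inE irr andbF.
Qed.

Lemma rk_surj (S : {set T}) r : r < #|S| -> exists2 x, x \in S & rk S x = r.
Proof.
move=> rS.
have u : uniq (map (rk S) (enum S)).
  rewrite map_inj_in_uniq ?enum_uniq //.
  by move=> x y; rewrite !mem_enum; apply: rk_inj.
have sub : {subset map (rk S) (enum S) <= iota 0 #|S|}.
  by move=> z /mapP[x]; rewrite mem_enum => xS ->; rewrite mem_iota add0n rk_bound.
have sz : size (iota 0 #|S|) <= size (map (rk S) (enum S)) by rewrite size_map size_iota -cardE.
have [_ eq] := uniq_min_size u sub sz.
have : r \in iota 0 #|S| by rewrite mem_iota.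
by rewrite -eq => /mapP[x]; rewrite mem_enum => xS ->; exists x.
Qed.

Lemma rk_min (S : {set T}) x y : x \in S -> y \in S -> rk S x = 0 -> y != x -> lt x y.
Proof.
move=> xS yS r0 yx; case: Hlt => _ _ tot.
case/orP: (tot _ _ yx) => // h; move: (rk_lt yS h); rewrite r0 //.
Qed.

Lemma rk_mono (S : {set T}) x y : x \in S -> y \in S -> rk S x < rk S y -> lt x y.
Proof.
move=> xS yS h; case: Hlt => irr _ tot.
have nxy : x != y by apply/eqP=> e; move: h; rewrite e ltnn.
case/orP: (tot _ _ nxy) => // h'; move: (rk_lt yS h') => h2.
by move: (ltn_trans h h2); rewrite ltnn.
Qed.

End Rank.

Lemma pigeon (T O : finType) (f : T -> O) (U : {set T}) b :
  0 < #|O| -> 0 < b -> #|O| * b <= #|U| -> exists o, b <= #|[set x in U | f x == o]|.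
Proof.
move=> O0 b0 h; suff: [exists o, b <= #|[set x in U | f x == o]|] by case/existsP=> o; exists o.
apply: contraT => /existsPn H.
have : #|U| <= #|O| * b.-1.
  rewrite -sum1_card (partition_big f xpredT) //=.
  have e : forall j, \sum_(i in U | f i == j) 1 <= b.-1.
    move=> j; rewrite sum1_card.
    have := H j; rewrite -ltnNge.
    have -> : #|[pred i | (i \in U) && (f i == j)]| = #|[set x in U | f x == j]|.
      by apply: eq_card => x; rewrite !inE.
    by case: (b) => // b'.
  apply: (@leq_trans (\sum_(j : O) b.-1)); first by apply: leq_sum => j _; apply: e.
  by rewrite sum_nat_const.
case: b b0 h {H} => // b _ h h2; move: (leq_trans h h2).
by rewrite leq_mul2l ltnn orbF; move: O0; case: #|O|.
Qed.

Definition homog (T : finType) (K : Type) a (c : {set T} -> K) (U : {set T}) :=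
  forall S1 S2 : {set T}, S1 \subset U -> S2 \subset U -> #|S1| = a -> #|S2| = a -> c S1 = c S2.

Lemma rk0_exists (T : finType) (lt : rel T) (S : {set T}) :
  sto lt -> 0 < #|S| -> exists2 x, x \in S & rk lt S x = 0.
Proof. by move=> H; apply: rk_surj. Qed.

Lemma ramsey a : forall b (K : finType), exists N, forall (T : finType) (lt : rel T), sto lt ->
  forall W : {set T}, N <= #|W| -> forall c : {set T} -> K,
  exists2 U : {set T}, U \subset W & b <= #|U| /\ homog a c U.
Proof.
elim: a => [|a IHa] b K.
  exists b => T lt Hlt W bW c; exists W => //; split => // S1 S2 _ _ /eqP.
  by rewrite cards_eq0 => /eqP -> /eqP; rewrite cards_eq0 => /eqP ->.
have EH : forall m, exists N, forall (T : finType) (lt : rel T), sto lt ->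
    forall W : {set T}, N <= #|W| -> forall c : {set T} -> K,
    exists2 U : {set T}, U \subset W & m <= #|U| /\ exists f : T -> option K,
    forall (S : {set T}) x, S \subset U -> #|S| = a.+1 -> x \in S -> rk lt S x = 0 -> Some (c S) = f x.
  elim=> [|m IHm].
    exists 0 => T lt Hlt W _ c; exists set0; rewrite ?sub0set //; split => //.
    exists (fun _ => None) => S x /subset_leq_card; rewrite cards0 leqn0 => /eqP ->.
    by [].
  have [Nm HNm] := IHm.
  have [N' HN'] := IHa Nm K.
  exists N'.+1 => T lt Hlt W NW c.
  have [x xW rx] := rk0_exists Hlt (leq_ltn_trans (leq0n _) NW).
  set W' := W :\ x.
  have NW' : N' <= #|W'|.
    by move: NW; rewrite (cardsD1 x W) xW add1n ltnS.
  have [Y YW' [NY hY]] := HN' T lt Hlt W' NW' (fun S => c (x |: S)).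
  have [U' U'Y [mU' [f' hf']]] := HNm T lt Hlt Y NY c.
  have U'W' : U' \subset W' by apply: subset_trans U'Y YW'.
  have xU' : x \notin U'.
    by apply/negP=> /(subsetP U'W'); rewrite !inE eqxx.
  set kap : option K := if [pick S0 : {set T} | (S0 \subset Y) && (#|S0| == a)] is Some S0
     then Some (c (x |: S0)) else None.
  exists (x |: U').
    apply/subsetP=> y; rewrite !inE => /orP[/eqP -> //|/(subsetP U'W')].
    by rewrite !inE => /andP[].
  split; first by rewrite cardsU1 xU' add1n ltnS.
  exists (fun y => if y == x then kap else f' y) => S z SU cS zS rz.
  have SW : S \subset W.
    apply/subsetP=> y /(subsetP SU); rewrite !inE => /orP[/eqP -> //|/(subsetP U'W')].
    by rewrite !inE => /andP[].
  case: (boolP (x \in S)) => xS.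
    have zx : z = x.
      apply/eqP; apply/negPn/negP => zx.
      have h1 : lt x z by apply: (rk_min Hlt xW (subsetP SW _ zS) rx zx).
      have h2 : lt z x by apply: (rk_min Hlt zS xS rz); rewrite eq_sym.
      by case: Hlt => irr tr _; move: (tr _ _ _ h1 h2); rewrite irr.
    subst z; rewrite eqxx.
    have SxY : S :\ x \subset Y.
      apply/subsetP=> y; rewrite !inE => /andP[yx /(subsetP SU)].
      by rewrite !inE (negPf yx) /= => /(subsetP U'Y).
    have cSx : #|S :\ x| = a by move: cS; rewrite (cardsD1 x S) xS add1n => -[].
    rewrite /kap; case: pickP => [S0 /andP[S0Y /eqP cS0]|].
      by rewrite -{1}(setD1K xS); congr Some; apply: hY.
    by move=> /(_ (S :\ x)); rewrite SxY cSx eqxx.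
  have zx : (z == x) = false by apply/negP => /eqP e; move: xS; rewrite -e zS.
  rewrite zx; apply: hf' => //.
  apply/subsetP=> y yS; move: (subsetP SU y yS); rewrite !inE => /orP[/eqP e|//].
  by move: xS; rewrite -e yS.
have [N HN] := EH (#|{: option K}| * b.+1).
exists N => T lt Hlt W NW c.
have [U UW [mU [f hf]]] := HN T lt Hlt W NW c.
have O0 : 0 < #|{: option K}| by apply/card_gt0P; exists None.
have [o ho] := pigeon f O0 (ltn0Sn b) mU.
exists [set y in U | f y == o].
  by apply: subset_trans UW; apply/subsetP=> y; rewrite inE => /andP[].
split; first by apply: ltnW.
move=> S1 S2 S1V S2V c1 c2.
have [z1 z1S r1] := rk0_exists Hlt (ltac:(rewrite c1 //) : 0 < #|S1|).
have [z2 z2S r2] := rk0_exists Hlt (ltac:(rewrite c2 //) : 0 < #|S2|).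
have S1U : S1 \subset U by apply: subset_trans S1V _; apply/subsetP=> y; rewrite inE => /andP[].
have S2U : S2 \subset U by apply: subset_trans S2V _; apply/subsetP=> y; rewrite inE => /andP[].
have e1 := hf S1 z1 S1U c1 z1S r1.
have e2 := hf S2 z2 S2U c2 z2S r2.
move: (subsetP S1V z1 z1S) (subsetP S2V z2 z2S); rewrite !inE => /andP[_ /eqP f1] /andP[_ /eqP f2].
by move: e1 e2; rewrite f1 f2 => e1 e2; apply: Some_inj; rewrite e1 e2.
Qed.


Section Sel.
Variables (T : finType) (lt : rel T) (t0 : T).
Hypothesis Hlt : sto lt.

Definition sel (Z : {set T}) r := odflt t0 [pick y in Z | rk lt Z y == r].

Lemma sel_spec (Z : {set T}) r : r < #|Z| -> sel Z r \in Z /\ rk lt Z (sel Z r) = r.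
Proof.
move=> rZ; rewrite /sel; case: pickP => [y /andP[yZ /eqP ->]|] //.
have [y yZ ry] := rk_surj Hlt rZ.
by move=> /(_ y); rewrite yZ ry eqxx.
Qed.

Lemma sel_lt (Z : {set T}) r r' : r < #|Z| -> r' < #|Z| -> lt (sel Z r) (sel Z r') = (r < r').
Proof.
move=> h h'; have [s1 r1] := sel_spec h; have [s2 r2] := sel_spec h'.
apply/idP/idP => H.
  by have := rk_lt Hlt s1 H; rewrite r1 r2.
by apply: (rk_mono Hlt s1 s2); rewrite r1 r2.
Qed.

Lemma sel_inj (Z : {set T}) r r' : r < #|Z| -> r' < #|Z| -> sel Z r = sel Z r' -> r = r'.
Proof.
move=> h h' e; have [_ r1] := sel_spec h; have [_ r2] := sel_spec h'.
by rewrite -r1 -r2 e.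
Qed.

End Sel.

Lemma rk_transport (X Y : finType) (ltX : rel X) (ltY : rel Y) (phi : X -> Y) x :
  injective phi -> (forall x y, ltY (phi x) (phi y) = ltX x y) ->
  rk ltY (phi @: setT) (phi x) = rk ltX setT x.
Proof.
move=> inj hom; rewrite /rk -(card_imset _ inj).
suff -> : [set y in phi @: setT | ltY y (phi x)] = phi @: [set y in setT | ltX y x] by [].
apply/setP=> y; apply/idP/idP.
  rewrite inE => /andP[/imsetP[x' _ ->]]; rewrite hom => h.
  by apply/imsetP; exists x'; rewrite ?inE.
case/imsetP=> x'; rewrite !inE => /andP[_ h] ->; rewrite hom h andbT.
by apply/imsetP; exists x'.
Qed.

Lemma rk_setT_lt (X : finType) (lt : rel X) : sto lt ->
  forall x y, (rk lt setT x < rk lt setT y) = lt x y.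
Proof.
move=> H x y; apply/idP/idP => h.
  by apply: (rk_mono H) h; rewrite inE.
by apply: (rk_lt H); rewrite ?inE.
Qed.

Record sstr (n : nat) := SStr { sV : finType; ssrt : sV -> 'I_n; sR : rel sV; slt : rel sV }.
Arguments ssrt {n} s.
Arguments sR {n} s.
Arguments slt {n} s.

Definition wfs n (S : sstr n) :=
  [/\ sto (slt S), (forall x y, ssrt S x < ssrt S y -> slt S x y) &
      (forall x y, sR S x y -> ssrt S x < ssrt S y)].

Definition remb n (A : sstr n) (TD : Type) (srtD : TD -> 'I_n) (ltD : rel TD) (f : sV A -> TD) :=
  injective f /\ (forall x, srtD (f x) = ssrt A x) /\ (forall x y, ltD (f x) (f y) = slt A x y).

Definition ltDM n M (p q : 'I_n * 'I_M) := (p.1 < q.1) || (p.1 == q.1) && (p.2 < q.2).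

Lemma sto_ltn M : sto (fun i j : 'I_M => i < j).
Proof.
split; first by move=> i; rewrite ltnn.
  by move=> i j k; apply: ltn_trans.
by move=> i j; rewrite neq_ltn.
Qed.

Lemma sto_ltDM n M : sto (@ltDM n M).
Proof.
split.
- by move=> [i j]; rewrite /ltDM /= !ltnn andbF.
- move=> [i1 j1] [i2 j2] [i3 j3]; rewrite /ltDM /=.
  case/orP=> [h|/andP[/eqP e h]]; case/orP=> [h'|/andP[/eqP e' h']].
  + by rewrite (ltn_trans h h').
  + by rewrite -e' h.
  + by rewrite e h'.
  + by rewrite e e' eqxx (ltn_trans h h') orbT.
- move=> [i1 j1] [i2 j2]; rewrite /ltDM /= xpair_eqE negb_and => h.
  case: (ltngtP i1 i2) => //= hE; first by rewrite orbT.
  have e' : i1 = i2 by apply: val_inj.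
  by subst; rewrite eqxx /= in h; rewrite eqxx /= -neq_ltn.
Qed.

Lemma wfs_rk n (A : sstr n) : wfs A -> forall x y, (rk (slt A) setT x < rk (slt A) setT y) = slt A x y.
Proof. by case=> H _ _; apply: rk_setT_lt. Qed.

Lemma wfs_asym n (A : sstr n) : wfs A -> forall x y, slt A x y -> slt A y x = false.
Proof.
case=> [[irr tr _] _ _] x y h; apply/negP => h'.
by move: (tr _ _ _ h h'); rewrite irr.
Qed.

Lemma wfs_sto n (A : sstr n) : wfs A -> sto (slt A). Proof. by case. Qed.

Lemma DR n (A B : sstr n) (K : finType) : wfs A -> wfs B ->
  exists M, forall chi : {ffun sV A -> 'I_n * 'I_M.+1} -> K,
  exists beta : sV B -> 'I_n * 'I_M.+1, remb (fun p => p.1) (@ltDM n M.+1) beta /\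
    forall g g' : sV A -> sV B, remb (ssrt B) (slt B) g -> remb (ssrt B) (slt B) g' ->
      chi [ffun x => beta (g x)] = chi [ffun x => beta (g' x)].
Proof.
move=> wA wB.
have [N HN] := ramsey #|sV A| #|sV B| K.
exists N => chi.
pose ltI := fun i j : 'I_N.+1 => i < j.
have sI : sto ltI := sto_ltn N.+1.
pose rA := rk (slt A) setT; pose rB := rk (slt B) setT.
pose alpha (Z : {set 'I_N.+1}) := [ffun x => (ssrt A x, sel ltI ord0 Z (rA x))].
have NW : N <= #|[set: 'I_N.+1]| by rewrite cardsT card_ord.
have [U _ [bU hU]] := HN _ ltI sI setT NW (fun Z => chi (alpha Z)).
pose beta := fun x : sV B => (ssrt B x, sel ltI ord0 U (rB x)).
have rBlt x : rB x < #|U|.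
  by apply: leq_trans bU; rewrite -cardsT /rB; apply: (rk_bound (wfs_sto wB)); rewrite inE.
have selB x y : ltI (sel ltI ord0 U (rB x)) (sel ltI ord0 U (rB y)) = slt B x y.
  by rewrite sel_lt // wfs_rk.
have ltbeta x y : ltDM (beta x) (beta y) = slt B x y.
  rewrite /ltDM /beta /=; have [sB mB _] := wB.
  case: (ltngtP (ssrt B x) (ssrt B y)) => h /=.
  - by rewrite mB.
  - have -> : (ssrt B x == ssrt B y) = false by apply/negP => /eqP e; move: h; rewrite e ltnn.
    by rewrite wfs_asym // mB.
  - have -> : ssrt B x == ssrt B y by apply/eqP; apply: val_inj.
    exact: selB.
exists beta; split.
  split; last by split.
  move=> x y e; case: (eqVneq x y) => // nxy; exfalso.
  case: (wfs_sto wB) => irr _ tot; case: (sto_ltDM n N.+1) => irr' _ _.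
  by case/orP: (tot _ _ nxy); rewrite -ltbeta e irr'.
have key : forall g : sV A -> sV B, remb (ssrt B) (slt B) g ->
    [ffun x => beta (g x)] = alpha [set sel ltI ord0 U (rB (g x)) | x in setT] /\
    [set sel ltI ord0 U (rB (g x)) | x in setT] \subset U /\
    #|[set sel ltI ord0 U (rB (g x)) | x in setT]| = #|sV A|.
  move=> g [ginj [gsrt glt]].
  pose phi := fun x => sel ltI ord0 U (rB (g x)).
  have phiinj : injective phi.
    move=> x y /(sel_inj sI (rBlt _) (rBlt _)) e.
    by apply: ginj; apply: (rk_inj (wfs_sto wB)) e; rewrite inE.
  have philt x y : ltI (phi x) (phi y) = slt A x y by rewrite /phi selB glt.
  have cZ : #|[set phi x | x in setT]| = #|sV A| by rewrite card_imset // cardsT.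
  split; last split => //.
    apply/ffunP=> x; rewrite !ffunE /beta gsrt; congr pair.
    have rAx : rA x < #|[set phi x | x in setT]|.
      by rewrite cZ -cardsT /rA; apply: (rk_bound (wfs_sto wA)); rewrite inE.
    have [sZ rZ] := sel_spec ord0 sI rAx.
    apply: (@rk_inj _ _ sI [set phi x0 | x0 in setT]); [by apply/imsetP; exists x | exact: sZ | ].
    rewrite rZ; exact: (rk_transport x phiinj philt).
  apply/subsetP=> y /imsetP[x _ ->].
  by have [] := sel_spec ord0 sI (rBlt (g x)).
move=> g g' hg hg'.
have [e1 [s1 c1]] := key g hg; have [e2 [s2 c2]] := key g' hg'.
by rewrite e1 e2; apply: hU.
Qed.


Definition line (I S : finType) (rho : {ffun I -> option S}) (s : S) : {ffun I -> S} :=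
  [ffun i => odflt s (rho i)].

Definition HJprop (S K : finType) :=
  exists I : finType, (exists t0 : I, True) /\ forall c : {ffun I -> S} -> K,
    exists rho : {ffun I -> option S}, (exists t, rho t = None) /\
      forall s s', c (line rho s) = c (line rho s').

Definition catw (I1 I2 : finType) (T : Type) (u : {ffun I1 -> T}) (v : {ffun I2 -> T}) :
  {ffun (I1 + I2)%type -> T} := [ffun x => match x with inl a => u a | inr b => v b end].

Lemma line_cat (I1 I2 S : finType) (r1 : {ffun I1 -> option S}) (r2 : {ffun I2 -> option S}) s :
  line (catw r1 r2) s = catw (line r1 s) (line r2 s).
Proof. by apply/ffunP=> [[a|b]]; rewrite !ffunE. Qed.

Lemma HJ_small (S K : finType) : #|S| <= 1 -> HJprop S K.
Proof.
move=> h; exists unit; split; first by exists tt.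
move=> c; exists [ffun _ => None]; split; first by exists tt; rewrite ffunE.
move=> s s'; congr c; congr line.
by move/card_le1_eqP: h => /(_ s s'); rewrite !inE => /(_ isT isT) ->.
Qed.

Theorem HJ (S K : finType) : HJprop S K.
Proof.
move: {2}#|S| (erefl #|S|) K => m; elim: m S => [|m IH] S cS K.
  by apply: HJ_small; rewrite cS.
case: m IH cS => [|m] IH cS; first by apply: HJ_small; rewrite cS.
have [z _] : exists z : S, True.
  have : 0 < #|S| by rewrite cS.
  by case/card_gt0P=> z _; exists z.
pose S' := {x : S | x != z}.
have cS' : #|{: S'}| = m.+1.
  rewrite card_sig.
  have -> : #|[pred x | x != z]| = #|predC1 z| by apply: eq_card => x; rewrite !inE.
  by rewrite cardC1 cS.
have [s0 _] : exists s0 : S', True.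
  have : 0 < #|{: S'}| by rewrite cS'.
  by case/card_gt0P=> s0 _; exists s0.
pose Cl r := exists I : finType, (exists t0 : I, True) /\ forall c : {ffun I -> S} -> K,
  (exists rho : {ffun I -> option S}, (exists t, rho t = None) /\
      forall s s', c (line rho s) = c (line rho s')) \/
  exists F : {ffun I -> S}, exists Col : {set K}, [/\ #|Col| = r, c F \notin Col &
    forall k, k \in Col -> exists rho : {ffun I -> option S}, [/\ (exists t, rho t = None),
      line rho z = F & forall s' : S', c (line rho (val s')) = k]].
have Cl0 : Cl 0.
  exists unit; split; first by exists tt.
  move=> c; right; exists [ffun _ => z]; exists set0; split; rewrite ?cards0 ?inE //.
  by move=> k; rewrite inE.
have ClS : forall r, Cl r -> Cl r.+1.
  move=> r [I1 [[t1 _] H1]].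
  have [I2 [[t2 _] H2]] := IH S' cS' {ffun {ffun I1 -> S} -> K}.
  exists (I2 + I1)%type; split; first by exists (inl t2).
  move=> c.
  pose lift (u : {ffun I2 -> S'}) := [ffun a => val (u a)].
  pose c2 (u : {ffun I2 -> S'}) := [ffun v => c (catw (lift u) v)].
  have [rho2 [[t rt] m2]] := H2 c2.
  pose u0 := lift (line rho2 s0).
  pose c1 v := c (catw u0 v).
  pose lrho2 := [ffun a => omap val (rho2 a)].
  have liftE (s' : S') : lift (line rho2 s') = line lrho2 (val s').
    by apply/ffunP=> a; rewrite !ffunE; case: (rho2 a).
  have cE (s' : S') (v : {ffun I1 -> S}) : c (catw (line lrho2 (val s')) v) = c1 v.
    have := congr1 (fun f : {ffun {ffun I1 -> S} -> K} => f v) (m2 s' s0).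
    by rewrite /c2 !ffunE -liftE.
  have [[rho1 [[t' rt'] m1]]|[F [Col [cCol nF HCol]]]] := H1 c1.
    left; exists (catw [ffun a => Some (u0 a)] rho1); split.
      by exists (inr t'); rewrite ffunE.
    move=> s s'; rewrite !line_cat.
    have -> : line [ffun a => Some (u0 a)] s = u0 by apply/ffunP=> a; rewrite !ffunE.
    have -> : line [ffun a => Some (u0 a)] s' = u0 by apply/ffunP=> a; rewrite !ffunE.
    exact: m1.
  pose F' := catw (line lrho2 z) F.
  pose Col' := c1 F |: Col.
  have Hnew : forall k, k \in Col' -> exists rho : {ffun (I2 + I1)%type -> option S},
      [/\ (exists t, rho t = None), line rho z = F' & forall s' : S', c (line rho (val s')) = k].
    move=> k; rewrite !inE => /orP[/eqP ->|kC].
      exists (catw lrho2 [ffun b => Some (F b)]); split.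
      - by exists (inl t); rewrite !ffunE rt.
      - rewrite line_cat; congr catw; by apply/ffunP=> b; rewrite !ffunE.
      - move=> s'; rewrite line_cat.
        have -> : line [ffun b => Some (F b)] (val s') = F by apply/ffunP=> b; rewrite !ffunE.
        exact: cE.
    have [rk [[tk rtk] lk ck]] := HCol k kC.
    exists (catw lrho2 rk); split.
    - by exists (inr tk); rewrite !ffunE rtk.
    - by rewrite line_cat lk.
    - by move=> s'; rewrite line_cat cE ck.
  case: (boolP (c F' \in Col')) => hF.
    left; have [rho [ex lz cs]] := Hnew _ hF; exists rho; split => //.
    suff all_k : forall s, c (line rho s) = c F' by move=> s s'; rewrite !all_k.
    move=> s; case: (eqVneq s z) => [->|nz]; first by rewrite lz.
    by have := cs (exist _ s nz).
  right; exists F'; exists Col'; split => //.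
  by rewrite cardsU1 nF cCol.
have Clk : forall r, Cl r by elim=> // r; apply: ClS.
have [I [t0 H]] := Clk #|K|.
exists I; split => // c.
have [//|[F [Col [cCol nF _]]]] := H c.
have : Col \subset [set~ c F].
  by apply/subsetP=> k kC; rewrite !inE; apply/eqP=> e; move: nF; rewrite -e kC.
move/subset_leq_card; rewrite cardsC1 cCol.
have : 0 < #|K| by apply/card_gt0P; exists (c F).
by case: #|K| => // k _; rewrite ltnn.
Qed.


Definition emb n (A B : sstr n) (f : sV A -> sV B) :=
  [/\ injective f, (forall x y, sR B (f x) (f y) = sR A x y), (forall x, ssrt B (f x) = ssrt A x) &
      (forall x y, slt B (f x) (f y) = slt A x y)].

Definition emb_b n (A B : sstr n) (f : {ffun sV A -> sV B}) :=
  [&& injectiveb f, [forall x, forall y, sR B (f x) (f y) == sR A x y],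
      [forall x, ssrt B (f x) == ssrt A x] & [forall x, forall y, slt B (f x) (f y) == slt A x y]].

Lemma emb_bP n (A B : sstr n) (f : {ffun sV A -> sV B}) : reflect (emb f) (emb_b f).
Proof.
apply: (iffP idP).
  case/and4P=> /injectiveP i /forallP r /forallP s /forallP l; split => //.
  - by move=> x y; apply/eqP; move/forallP: (r x) => /(_ y).
  - by move=> x; apply/eqP.
  - by move=> x y; apply/eqP; move/forallP: (l x) => /(_ y).
case=> i r s l; apply/and4P; split.
- by apply/injectiveP.
- by apply/forallP=> x; apply/forallP=> y; rewrite r.
- by apply/forallP=> x; rewrite s.
- by apply/forallP=> x; apply/forallP=> y; rewrite l.
Qed.

Lemma emb_comp n (A B C : sstr n) (f : sV A -> sV B) (g : sV B -> sV C) :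
  emb f -> emb g -> emb (fun x => g (f x)).
Proof.
case=> fi fr fs fl [gi gr gs gl]; split.
- by move=> x y /gi /fi.
- by move=> x y; rewrite gr fr.
- by move=> x; rewrite gs fs.
- by move=> x y; rewrite gl fl.
Qed.

Definition img (X Y : finType) (f : X -> Y) := [set f x | x in [set: X]].

Section Pic.
Variables (n : nat) (TD : finType) (srtD : TD -> 'I_n) (ltD : rel TD).
Hypothesis stoD : sto ltD.
Hypothesis monD : forall p q, srtD p < srtD q -> ltD p q.

Definition wfp (P : sstr n) (pi : sV P -> TD) :=
  [/\ wfs P, (forall x, ssrt P x = srtD (pi x)) &
      (forall x y, pi x != pi y -> slt P x y = ltD (pi x) (pi y))].

Definition mkS (V : finType) (pi : V -> TD) (R w : rel V) : sstr n :=
  @SStr n V (fun x => srtD (pi x)) R (fun x y => ltD (pi x) (pi y) || (pi x == pi y) && w x y).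

Lemma mkS_wf (V : finType) (pi : V -> TD) (R w : rel V) :
  irreflexive w ->
  (forall x y z, pi x = pi y -> pi y = pi z -> w x y -> w y z -> w x z) ->
  (forall x y, pi x = pi y -> x != y -> w x y || w y x) ->
  (forall x y, R x y -> srtD (pi x) < srtD (pi y)) ->
  @wfp (mkS pi R w) pi.
Proof.
move=> wirr wtr wtot Rs; case: stoD => irr tr tot.
split => //; last first.
  by move=> x y /= /negPf ->; rewrite andFb orbF.
split => //=; last by move=> x y /monD ->.
split.
- by move=> x; rewrite irr eqxx wirr.
- move=> y x z /=; case/orP=> [h1|/andP[/eqP e1 h1]]; case/orP=> [h2|/andP[/eqP e2 h2]].
  + by rewrite (tr _ _ _ h1 h2).
  + by rewrite -e2 h1.
  + by rewrite e1 h2.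
  + by rewrite e1 e2 eqxx (wtr _ _ _ e1 e2 h1 h2) orbT.
- move=> x y nxy /=; case: (eqVneq (pi x) (pi y)) => e.
    rewrite e irr /=; case/orP: (wtot _ _ e nxy) => ->; rewrite ?orbT //.
  by case/orP: (tot _ _ e) => ->; rewrite ?orbT.
Qed.

End Pic.

Lemma emb_ext n (A B : sstr n) (f g : sV A -> sV B) : (forall x, f x = g x) -> emb f -> emb g.
Proof.
move=> e [i r s l]; split.
- by move=> x y; rewrite -!e => /i.
- by move=> x y; rewrite -!e r.
- by move=> x; rewrite -e s.
- by move=> x y; rewrite -!e l.
Qed.

Lemma sto_asym (T : finType) (lt : rel T) x y : sto lt -> lt x y -> lt y x = false.
Proof. by case=> irr tr _ h; apply/negP=> h'; move: (tr _ _ _ h h'); rewrite irr. Qed.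


Section PL.
Variables (n : nat) (TD : finType) (srtD : TD -> 'I_n) (ltD : rel TD).
Hypothesis stoD : sto ltD.
Hypothesis monD : forall p q, srtD p < srtD q -> ltD p q.
Variables (A Q : sstr n) (alpha : sV A -> TD) (piQ : sV Q -> TD).
Hypothesis ainj : injective alpha.
Hypothesis wQ : wfp srtD ltD piQ.
Hypothesis hQ : forall q, exists a, alpha a = piQ q.

Definition transb (f : {ffun sV A -> sV Q}) := emb_b f && [forall a, piQ (f a) == alpha a].
Definition Sig := {f : {ffun sV A -> sV Q} | transb f}.

Lemma SigP (s : Sig) : emb (val s) /\ forall a, piQ (val s a) = alpha a.
Proof.
case: s => f /= /andP[/emb_bP e /forallP h]; split => // a; exact/eqP.
Qed.

Definition invA d := [pick a | alpha a == d].

Lemma invA_pi q : exists a, invA (piQ q) = Some a /\ alpha a = piQ q.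
Proof.
rewrite /invA; case: pickP => [a /eqP e|]; first by exists a.
by have [a e] := hQ q; move=> /(_ a); rewrite e eqxx.
Qed.

Lemma invA_alpha a : invA (alpha a) = Some a.
Proof.
rewrite /invA; case: pickP => [a' /eqP e|]; first by rewrite (ainj e).
by move=> /(_ a); rewrite eqxx.
Qed.

Section Words.
Variables (I : finType) (t0 : I).

Definition Lw (rho : {ffun I -> option Sig}) q : {ffun I -> sV Q} :=
  [ffun t => if rho t is Some s then (if invA (piQ q) is Some a then val s a else q) else q].

Lemma Lw_pi rho q t : piQ (Lw rho q t) = piQ q.
Proof.
rewrite ffunE; case: (rho t) => // s.
have [a [-> e]] := invA_pi q; by have [_ ->] := SigP s.
Qed.

Definition unif (w : {ffun I -> sV Q}) := [forall t, piQ (w t) == piQ (w t0)].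
Definition VC := {w : {ffun I -> sV Q} | unif w}.
Definition piC (w : VC) := piQ (val w t0).
Definition hasNone (rho : {ffun I -> option Sig}) := [exists t, rho t == None].
Definition RC (w1 w2 : VC) := [exists rho, [exists q1, [exists q2,
  [&& hasNone rho, sR Q q1 q2, val w1 == Lw rho q1 & val w2 == Lw rho q2]]]].
Definition lexw (w1 w2 : VC) := [exists t, slt Q (val w1 t) (val w2 t) &&
  [forall s, (enum_rank s < enum_rank t) ==> (val w1 s == val w2 s)]].
Definition Cstr := mkS srtD ltD piC RC lexw.

Lemma unif_pi (w : VC) t : piQ (val w t) = piC w.
Proof. by case: w => w hw; rewrite /piC /=; move/forallP: (hw) => /(_ t) /eqP. Qed.

Lemma Cwf : wfp srtD ltD (P := Cstr) piC.
Proof.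
have [[sQ mQ RQ] srtQ _] := wQ.
have [irrQ trQ totQ] := sQ.
apply: mkS_wf => //.
- by move=> w; apply: negbTE; apply/existsP => -[t /andP[]]; rewrite irrQ.
- move=> x y z _ _ /existsP[t1 /andP[h1 e1]] /existsP[t2 /andP[h2 e2]].
  apply/existsP; case: (ltngtP (enum_rank t1) (enum_rank t2)) => c.
  + exists t1; move/forallP: (e2) => /(_ t1); rewrite c /= => /eqP <-; rewrite h1 /=.
    apply/forallP=> s; apply/implyP=> hs; move/forallP: (e1) => /(_ s); rewrite hs => /eqP ->.
    by move/forallP: (e2) => /(_ s) /implyP; apply; rewrite (ltn_trans hs c).
  + exists t2; move/forallP: (e1) => /(_ t2); rewrite c /= => /eqP ->; rewrite h2 /=.
    apply/forallP=> s; apply/implyP=> hs; move/forallP: (e2) => /(_ s); rewrite hs => /eqP <-.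
    by move/forallP: (e1) => /(_ s) /implyP; apply; rewrite (ltn_trans hs c).
  + have ct : t1 = t2 by apply: enum_rank_inj; apply: val_inj.
    subst t2; exists t1; rewrite (trQ _ _ _ h1 h2) /=.
    apply/forallP=> s; apply/implyP=> hs; move/forallP: (e1) => /(_ s); rewrite hs => /eqP ->.
    by move/forallP: (e2) => /(_ s) /implyP; apply.
- move=> x y _ nxy.
  have [t1 d1] : exists t, val x t != val y t.
    apply/existsP; apply: contraT => /existsPn H; rewrite -(negbTE nxy).
    apply/eqP; apply: val_inj; apply/ffunP=> t; apply/eqP; move: (H t); by rewrite negbK.
  pose tm := [arg min_(t < t1 | val x t != val y t) enum_rank t].
  have [dtm mintm] : val x tm != val y tm /\ forall s, val x s != val y s ->
      enum_rank tm <= enum_rank s.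
    by rewrite /tm; case: arg_minnP => // t ht hmin; split.
  have eqs : forall s, enum_rank s < enum_rank tm -> val x s == val y s.
    move=> s hs; apply: contraT => ds; move: (mintm s ds); rewrite leqNgt hs.
    by [].
  case/orP: (totQ _ _ dtm) => h; [apply/orP; left|apply/orP; right];
    apply/existsP; exists tm; rewrite h /=; apply/forallP=> s; apply/implyP=> hs.
    exact: eqs.
  by rewrite eq_sym; apply: eqs.
- move=> x y /existsP[rho /existsP[q1 /existsP[q2 /and4P[_ R12 /eqP e1 /eqP e2]]]].
  rewrite /piC e1 e2 !Lw_pi -!srtQ; exact: RQ.
Qed.

Lemma Lw_unif rho q : unif (Lw rho q).
Proof. by apply/forallP=> t; rewrite !Lw_pi. Qed.

Definition gL rho q : VC := exist _ (Lw rho q) (Lw_unif rho q).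

Lemma gL_pi rho q : piC (gL rho q) = piQ q.
Proof. by rewrite /piC /= Lw_pi. Qed.

Lemma Lw_R rho rho' q1 q2 q1' q2' : hasNone rho -> hasNone rho' ->
  Lw rho q1 = Lw rho' q1' -> Lw rho q2 = Lw rho' q2' -> sR Q q1' q2' -> sR Q q1 q2.
Proof.
move=> /existsP[t /eqP rt] /existsP[t' /eqP rt'] e1 e2 R'.
have c1 := congr1 (fun w : {ffun I -> sV Q} => w t) e1.
have c2 := congr1 (fun w : {ffun I -> sV Q} => w t) e2.
have c1' := congr1 (fun w : {ffun I -> sV Q} => w t') e1.
have c2' := congr1 (fun w : {ffun I -> sV Q} => w t') e2.
move: c1 c2 c1' c2'; rewrite /= !ffunE rt rt' /=.
case: (rho' t) => [s'|]; last by move=> -> ->.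
have [a1 [-> ea1]] := invA_pi q1'; have [a2 [-> ea2]] := invA_pi q2'.
move=> c1 c2; case: (rho t') => [s|]; last by move=> -> ->.
have [b1 [-> eb1]] := invA_pi q1; have [b2 [-> eb2]] := invA_pi q2.
have [es' ps'] := SigP s'; have [es ps] := SigP s.
have eab1 : b1 = a1 by apply: ainj; rewrite eb1 c1 ps'.
have eab2 : b2 = a2 by apply: ainj; rewrite eb2 c2 ps'.
move=> c1' c2'; move: R'; rewrite -c1' -c2' eab1 eab2 c1 c2.
by case: es => _ -> _ _; case: es' => _ -> _ _.
Qed.

Lemma lexw_gL rho q1 q2 : hasNone rho -> piQ q1 = piQ q2 -> slt Q q1 q2 ->
  lexw (gL rho q1) (gL rho q2).
Proof.
move=> /existsP[t1 /eqP rt1] e h.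
pose tm := [arg min_(t < t1 | rho t == None) enum_rank t].
have [rtm mintm] : rho tm = None /\ forall s, rho s = None -> enum_rank tm <= enum_rank s.
  rewrite /tm; case: arg_minnP; first by rewrite rt1.
  by move=> t /eqP ht hmin; split => // s /eqP; apply: hmin.
apply/existsP; exists tm; rewrite /= !ffunE rtm h /=.
apply/forallP=> s; apply/implyP=> hs; rewrite !ffunE e.
case: (boolP (rho s == None)) => [/eqP ns|].
  by move: (mintm s ns); rewrite leqNgt hs.
by have [a [ea _]] := invA_pi q2; case: (rho s) => // s0 _; rewrite ea.
Qed.

Lemma gL_emb rho : hasNone rho -> emb (A := Q) (B := Cstr) (gL rho).
Proof.
move=> hN; have [[sC _ _] _ lC] := Cwf.
have [[sQ _ _] srtQ lQ] := wQ.
split.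
- move=> q1 q2 /(congr1 val) /= e; case/existsP: hN => t /eqP rt.
  by move: (congr1 (fun w : {ffun I -> sV Q} => w t) e); rewrite /= !ffunE rt.
- move=> q1 q2 /=; apply/idP/idP.
    case/existsP=> rho' /existsP[q1' /existsP[q2' /and4P[hN' R' /eqP e1 /eqP e2]]].
    exact: (Lw_R hN hN' e1 e2 R').
  by move=> R12; apply/existsP; exists rho; apply/existsP; exists q1; apply/existsP; exists q2;
    rewrite hN R12 !eqxx.
- by move=> q /=; rewrite gL_pi srtQ.
- move=> q1 q2; case: (eqVneq (piQ q1) (piQ q2)) => e.
    have e' : piC (gL rho q1) = piC (gL rho q2) by rewrite !gL_pi.
    have [irrD _ _] := stoD.
    rewrite /= e' eqxx irrD /=.
    apply/idP/idP => h; last exact: lexw_gL.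
    case: (eqVneq q1 q2) => [eq12|n12].
      by move: h; rewrite eq12 => /existsP[t /andP[]]; case: sQ => irrQ _ _; rewrite irrQ.
    case: sQ => _ _ tot; case/orP: (tot _ _ n12) => // h'.
    have h2 := lexw_gL hN (esym e) h'.
    have a1 : slt Cstr (gL rho q1) (gL rho q2) by rewrite /= e' eqxx h orbT.
    have a2 : slt Cstr (gL rho q2) (gL rho q1) by rewrite /= e' eqxx h2 orbT.
    by move: (sto_asym sC a1); rewrite a2.
  by rewrite lQ // /= !gL_pi (negbTE e) /= orbF.
Qed.

End Words.

Theorem PL (K : finType) : exists C : sstr n, exists piC : sV C -> TD,
  wfp srtD ltD piC /\ forall c : {set sV C} -> K, exists g : sV Q -> sV C,
  [/\ emb g, (forall q, piC (g q) = piQ q) &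
    forall f f' : sV A -> sV Q, emb f -> emb f' -> (forall a, piQ (f a) = alpha a) ->
      (forall a, piQ (f' a) = alpha a) -> c (img (fun a => g (f a))) = c (img (fun a => g (f' a)))].
Proof.
have [I [[t0 _] HI]] := HJ Sig K.
exists (Cstr t0); exists (piC (t0 := t0)); split; first exact: Cwf.
move=> c.
have pvu : forall (p : {ffun I -> Sig}) a, unif t0 [ffun t => val (p t) a].
  move=> p a; apply/forallP=> t; rewrite !ffunE.
  by have [_ ->] := SigP (p t); have [_ ->] := SigP (p t0).
pose pv (p : {ffun I -> Sig}) (a : sV A) : VC t0 := exist _ [ffun t => val (p t) a] (pvu p a).
pose cH (p : {ffun I -> Sig}) := c (img (pv p)).
have [rho [hN mono]] := HI cH.
have hN' : hasNone rho by case: hN => t rt; apply/existsP; exists t; rewrite rt.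
exists (gL t0 rho); split; first exact: gL_emb.
  by move=> q; rewrite gL_pi.
have key : forall f : sV A -> sV Q, emb f -> (forall a, piQ (f a) = alpha a) ->
    exists s : Sig, img (fun a => gL t0 rho (f a)) = img (pv (line rho s)).
  move=> f ef pf.
  have tf : transb [ffun a => f a].
    apply/andP; split.
      by apply/emb_bP; apply: emb_ext ef => x; rewrite ffunE.
    by apply/forallP=> a; rewrite ffunE pf.
  exists (exist (fun g => transb g) [ffun a => f a] tf); apply: eq_imset => a.
  apply: val_inj; apply/ffunP=> t; rewrite /= !ffunE.
  case: (rho t) => [s|] /=; last by rewrite ffunE.
  by rewrite pf invA_alpha.
move=> f f' ef ef' pf pf'.
have [s e] := key f ef pf; have [s' e'] := key f' ef' pf'.
by rewrite e e'; apply: mono.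
Qed.

End PL.


Section Amalg.
Variables (n : nat) (TD : finType) (srtD : TD -> 'I_n) (ltD : rel TD).
Hypothesis stoD : sto ltD.
Hypothesis monD : forall p q, srtD p < srtD q -> ltD p q.
Variables (A P : sstr n) (alpha : sV A -> TD) (piP : sV P -> TD).
Hypothesis ainj : injective alpha.
Hypothesis wP : wfp srtD ltD piP.

Definition J d := [exists a, alpha a == d].
Definition VQ := {x : sV P | J (piP x)}.
Definition Qs : sstr n := @SStr n VQ (fun q => ssrt P (val q)) (fun q1 q2 => sR P (val q1) (val q2))
  (fun q1 q2 => slt P (val q1) (val q2)).
Definition piQ (q : VQ) := piP (val q).

Lemma wQ : wfp srtD ltD (P := Qs) piQ.
Proof.
have [[[irr tr tot] mon Rs] srt lt] := wP.
split => //; last by move=> x y h; apply: lt.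
split => //; last by move=> x y; apply: Rs.
  split.
  - by move=> x; apply: irr.
  - by move=> x y z; apply: tr.
  - by move=> x y nxy; apply: tot; apply: contra nxy => /eqP e; apply/eqP; apply: val_inj.
- by move=> x y; apply: mon.
- by move=> x; apply: srt.
Qed.

Lemma hQ (q : VQ) : exists a, alpha a = piQ q.
Proof. by case: q => x hx; rewrite /piQ /=; move/existsP: (hx) => [a /eqP e]; exists a. Qed.

Variables (C : sstr n) (piC : sV C -> TD).
Hypothesis wC : wfp srtD ltD piC.

Definition pemb_b (g : {ffun VQ -> sV C}) := emb_b (A := Qs) g && [forall q, piC (g q) == piQ q].
Definition G := {g : {ffun VQ -> sV C} | pemb_b g}.

Lemma GP (g : G) : emb (A := Qs) (val g) /\ forall q, piC (val g q) = piQ q.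
Proof. by case: g => g /= /andP[/emb_bP e /forallP h]; split => // q; apply/eqP. Qed.

Definition V' := (sV C + (G * sV P))%type.
Definition pi' (u : V') := match u with inl c => piC c | inr (_, x) => piP x end.
Definition R' (u v : V') := match u, v with
  | inl c1, inl c2 => sR C c1 c2
  | inr (g1, x1), inr (g2, x2) => (g1 == g2) && sR P x1 x2
  | inl c, inr (g, x) => [exists q, (val g q == c) && sR P (val q) x]
  | inr (g, x), inl c => [exists q, (val g q == c) && sR P x (val q)]
  end.
Definition w' (u v : V') := match u, v with
  | inl c1, inl c2 => slt C c1 c2
  | inl _, inr _ => true
  | inr _, inl _ => false
  | inr (g1, x1), inr (g2, x2) => (enum_rank g1 < enum_rank g2) || (g1 == g2) && slt P x1 x2
  end.
Definition P' := mkS srtD ltD pi' R' w'.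

Lemma wP' : wfp srtD ltD (P := P') pi'.
Proof.
have [[[irrP trP totP] monP RsP] srtP ltP] := wP.
have [[[irrC trC totC] monC RsC] srtC ltC] := wC.
apply: mkS_wf => //.
- by move=> [c|[g x]] /=; rewrite ?irrC ?ltnn ?eqxx ?irrP.
- move=> [c1|[g1 x1]] [c2|[g2 x2]] [c3|[g3 x3]] //= _ _.
  + exact: trC.
  + case/orP=> [h1|/andP[/eqP e1 h1]]; case/orP=> [h2|/andP[/eqP e2 h2]]; subst.
    * by rewrite (ltn_trans h1 h2).
    * by rewrite h1.
    * by rewrite h2.
    * by rewrite eqxx (trP _ _ _ h1 h2) orbT.
- move=> [c1|[g1 x1]] [c2|[g2 x2]] //= _ ne.
  + by apply: totC; apply: contra ne => /eqP ->.
  + case: (eqVneq g1 g2) => [e|ne'].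
      subst; rewrite ltnn /=; apply: totP; apply: contra ne => /eqP ->; by [].
    have : enum_rank g1 != enum_rank g2 by apply: contra ne' => /eqP /enum_rank_inj ->.
    by rewrite neq_ltn => /orP[] ->; rewrite ?orbT.
- move=> [c1|[g1 x1]] [c2|[g2 x2]] /=.
  + by move/RsC; rewrite !srtC.
  + case/existsP=> q /andP[/eqP <- h]; have [_ pg] := GP g2.
    by rewrite pg /piQ -!srtP; exact: RsP.
  + case/existsP=> q /andP[/eqP <- h]; have [_ pg] := GP g1.
    by rewrite pg /piQ -!srtP; exact: RsP.
  + by case/andP=> _ /RsP; rewrite !srtP.
Qed.

Definition iota (g : G) (x : sV P) : V' :=
  if insub x is Some q then inl (val g q) else inr (g, x).

Lemma iota_pi g x : pi' (iota g x) = piP x.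
Proof.
rewrite /iota; case: insubP => [q _ <-|_] //=.
by have [_ ->] := GP g.
Qed.

Lemma iota_emb g : emb (A := P) (B := P') (iota g).
Proof.
have [[[irrP trP totP] monP RsP] srtP ltP] := wP.
have [[gi gR gs gl] gp] := GP g.
have [irrD _ _] := stoD.
split.
- move=> x y; rewrite /iota.
  case: insubP => [qx _ <-|_]; case: insubP => [qy _ <-|_] //.
  + by case=> /gi ->.
  + by case.
- move=> x y; rewrite /iota.
  case: insubP => [qx _ <-|_]; case: insubP => [qy _ <-|_] /=.
  + exact: (gR qx qy).
  + apply/idP/idP; last by move=> h; apply/existsP; exists qx; rewrite eqxx h.
    by case/existsP=> q /andP[/eqP /gi ->].
  + apply/idP/idP; last by move=> h; apply/existsP; exists qy; rewrite eqxx h.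
    by case/existsP=> q /andP[/eqP /gi ->].
  + by rewrite eqxx.
- by move=> x /=; rewrite iota_pi srtP.
- move=> x y /=; rewrite !iota_pi.
  case: (eqVneq (piP x) (piP y)) => e; last by rewrite ltP // orbF.
  rewrite e irrD /=.
  rewrite /iota; case: insubP => [qx Jx <-|nJx]; case: insubP => [qy Jy <-|nJy] /=.
  + exact: (gl qx qy).
  + by move: nJy; rewrite -e Jx.
  + by move: nJx; rewrite e Jy.
  + by rewrite ltnn eqxx.
Qed.

Lemma iota_alpha g (f : sV A -> sV P) : (forall a, piP (f a) = alpha a) -> emb f ->
  exists fQ : sV A -> VQ, [/\ emb (B := Qs) fQ, (forall a, piQ (fQ a) = alpha a) &
    forall a, iota g (f a) = inl (val g (fQ a))].
Proof.
move=> pf ef.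
have Jf a : J (piP (f a)) by apply/existsP; exists a; rewrite pf.
exists (fun a => exist _ (f a) (Jf a)); split.
- case: ef => i r s l; split => //.
  by move=> x y /(congr1 val) /= /i.
- by move=> a; rewrite /piQ /= pf.
- move=> a; rewrite /iota; case: insubP => [q _ e|]; last by rewrite Jf.
  by congr (inl (val g _)); apply: val_inj.
Qed.

Lemma inl_emb : emb (A := C) (B := P') inl.
Proof.
have [[[irrC trC totC] monC RsC] srtC ltC] := wC.
split => //.
- by move=> x y [].
- move=> x y /=; case: (eqVneq (piC x) (piC y)) => e.
    by rewrite e; have [irrD _ _] := stoD; rewrite irrD.
  by rewrite ltC // orbF.
Qed.

End Amalg.


Section Main.
Variables (n : nat) (TD : finType) (srtD : TD -> 'I_n) (ltD : rel TD).
Hypothesis stoD : sto ltD.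
Hypothesis monD : forall p q, srtD p < srtD q -> ltD p q.
Variables (A : sstr n) (K : finType).

Lemma emb_id (P : sstr n) : emb (A := P) (B := P) id.
Proof. by split. Qed.

Lemma main_ind (s : seq {ffun sV A -> TD}) : (forall al, al \in s -> injective al) ->
  forall (P : sstr n) (piP : sV P -> TD), wfp srtD ltD piP ->
  exists P2 : sstr n, exists piP2 : sV P2 -> TD, wfp srtD ltD piP2 /\
  forall c : {set sV P2} -> K, exists h : sV P -> sV P2,
  [/\ emb h, (forall x, piP2 (h x) = piP x) &
    forall al, al \in s -> forall f f' : sV A -> sV P, emb f -> emb f' ->
      (forall a, piP (f a) = al a) -> (forall a, piP (f' a) = al a) ->
      c (img (fun a => h (f a))) = c (img (fun a => h (f' a)))].
Proof.
elim: s => [|al s IH] Hinj P piP wP.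
  exists P; exists piP; split => // c; exists id; split => //; first exact: emb_id.
have ainj : injective al by apply: Hinj; rewrite mem_head.
have [C [piC [wC HC]]] := PL stoD monD ainj (wQ al wP) (@hQ _ _ _ _ al piP) K.
have wP1 := wP' stoD monD al wP wC.
have Hinj' : forall al', al' \in s -> injective al'.
  by move=> al' h; apply: Hinj; rewrite inE h orbT.
have [P2 [piP2 [wP2 H2]]] := IH Hinj' _ _ wP1.
exists P2; exists piP2; split => // c.
have [h1 [eh1 ph1 m1]] := H2 c.
pose c' (S : {set sV C}) := c [set h1 (inl x) | x in S].
have [g [eg pg mg]] := HC c'.
have gb : pemb_b (alpha := al) (piP := piP) piC [ffun q => g q].
  apply/andP; split.
    by apply/emb_bP; apply: emb_ext eg => q; rewrite ffunE.
  by apply/forallP=> q; rewrite ffunE pg.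
pose gG : G al piP piC := exist _ [ffun q => g q] gb.
exists (fun x => h1 (iota gG x)); split.
- by apply: emb_comp eh1; apply: iota_emb.
- by move=> x; rewrite ph1 iota_pi.
move=> al0; rewrite inE => /orP[/eqP ->|ins] f f' ef ef' pf pf'.
  have [fQ [efQ pfQ ifQ]] := iota_alpha gG pf ef.
  have [fQ' [efQ' pfQ' ifQ']] := iota_alpha gG pf' ef'.
  have E : forall (fQ : sV A -> VQ al piP) (f : sV A -> sV P),
      (forall a, iota gG (f a) = inl (val gG (fQ a))) ->
      img (fun a => h1 (iota gG (f a))) = [set h1 (inl x) | x in img (fun a => g (fQ a))].
    move=> fQ0 f0 i0; rewrite /img -imset_comp; apply: eq_imset => a.
    by rewrite /= i0 ffunE.
  rewrite (E fQ f ifQ) (E fQ' f' ifQ').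
  exact: (mg fQ fQ' efQ efQ' pfQ pfQ').
apply: (m1 al0 ins (fun a => iota gG (f a)) (fun a => iota gG (f' a))).
- by apply: emb_comp ef _; apply: iota_emb.
- by apply: emb_comp ef' _; apply: iota_emb.
- by move=> a; rewrite iota_pi pf.
- by move=> a; rewrite iota_pi pf'.
Qed.

End Main.


Section Conv.
Variables (n : nat) (n0 : 0 < n).

Definition i0 : 'I_n := Ordinal n0.
Definition sA (A : str n) (x : car A) : 'I_n := odflt i0 [pick i | P A i x].
Definition conv_in (A : str n) : sstr n :=
  @SStr n (car A) (@sA A) (fun x y => (sA x < sA y) && E A x y) (lt A).
Definition Eo (S : sstr n) (x y : sV S) :=
  (ssrt S x < ssrt S y) && sR S x y || (ssrt S y < ssrt S x) && ~~ sR S y x.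
Definition conv_out (S : sstr n) : str n :=
  @Str n (sV S) (@Eo S) (fun i x => ssrt S x == i) (slt S).

Section InK.
Variables (A : str n) (KA : inK A).

Lemma sA_spec (x : car A) : P A (sA x) x.
Proof.
have [_ [_ [nref [_ [_ [_ [_ [pof _]]]]]]]] := KA.
rewrite /sA; case: pickP => [i //|none].
have [i hi] := pof x; move: (none i); rewrite (hi x) nref //.
Qed.

Lemma sA_P i (x : car A) : P A i x = (sA x == i).
Proof.
have [_ [_ [_ [_ [_ [disj _]]]]]] := KA.
apply/idP/idP => [h|/eqP <-]; last exact: sA_spec.
apply/negPn/negP => ne; move: (disj _ _ x ne (sA_spec x)); rewrite h.
by [].
Qed.

Lemma same_part (x y : car A) : nonadj x y = (sA x == sA y).
Proof.
have [_ [_ [_ [_ [_ [_ [_ [pof _]]]]]]]] := KA.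
have [i hi] := pof x.
have ix : P A i x by rewrite (hi x); have [_ [_ [nref _]]] := KA; apply: nref.
by rewrite -hi sA_P eq_sym; move: ix; rewrite sA_P => /eqP ->.
Qed.

Lemma E_in (x y : car A) : E A x y = Eo (S := conv_in A) x y.
Proof.
have [irr [asym _]] := KA.
rewrite /Eo /=.
case: (ltngtP (sA x) (sA y)) => h /=.
- by rewrite orbF.
- have nx : ~~ nonadj x y.
    by rewrite same_part; apply/eqP => e; move: h; rewrite e ltnn.
  move: nx; rewrite /nonadj negb_or negb_and !negbK => /andP[_ h'].
  case/orP: h' => h'; first by rewrite h' (negbTE (asym _ _ h')).
  by rewrite h' /=; apply/negbTE; apply: asym.
- have : nonadj x y by rewrite same_part; apply/eqP; apply: val_inj.
  rewrite /nonadj => /orP[/eqP ->|/andP[/negbTE -> _]] //.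
  by apply/negbTE.
Qed.

Lemma wfs_in : wfs (conv_in A).
Proof.
have [_ [_ [_ [_ [_ [_ [_ [_ [ltirr [lttr [lttot conv]]]]]]]]]]] := KA.
split => //=.
- split.
  + by move=> x; apply/negbTE; apply: ltirr.
  + by move=> y x z h1 h2; apply: lttr h2.
  + exact: lttot.
- by move=> x y h; apply: (conv (sA x) (sA y)) => //; apply: sA_spec.
- by move=> x y /andP[].
Qed.

End InK.

Lemma inK_out (S : sstr n) : wfs S -> inK (conv_out S).
Proof.
case=> [[irr tr tot] mon Rs].
have naE : forall x y : sV S, nonadj (A := conv_out S) x y = (ssrt S x == ssrt S y).
  move=> x y; rewrite /nonadj /= /Eo.
  case: (ltngtP (ssrt S x) (ssrt S y)) => h /=.
  - have -> : (ssrt S x == ssrt S y) = false by apply/negP=> /eqP e; move: h; rewrite e ltnn.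
    have -> : (x == y) = false by apply/negP=> /eqP e; move: h; rewrite e ltnn.
    by case: (sR S x y).
  - have -> : (ssrt S x == ssrt S y) = false by apply/negP=> /eqP e; move: h; rewrite e ltnn.
    have -> : (x == y) = false by apply/negP=> /eqP e; move: h; rewrite e ltnn.
    by case: (sR S y x).
  - by rewrite orbT; apply/esym/eqP; apply: val_inj.
split.
  by move=> x; rewrite /= /Eo ltnn.
split.
  move=> x y; rewrite /= /Eo; case: (ltngtP (ssrt S x) (ssrt S y)) => //= h.
  by rewrite orbF negbK.
  by rewrite orbF.
split; first by move=> x; rewrite naE.
split; first by move=> x y; rewrite !naE eq_sym.
split; first by move=> x y z; rewrite !naE => /eqP -> /eqP ->.
split; first by move=> i j x ij /= /eqP ->.
split.
  move=> i; case: (pickP (fun x => ssrt S x == i)) => [x hx|none].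
    by right; exists x => y /=; rewrite naE; move/eqP: hx => ->; rewrite eq_sym.
  by left => x; rewrite /= none.
split; first by move=> x; exists (ssrt S x) => y /=; rewrite naE eq_sym.
split; first by move=> x /=; rewrite irr.
split; first by move=> x y z; apply: tr.
split; first by move=> x y; apply: tot.
by move=> i j x y ij /= /eqP ex /eqP ey; apply: mon; rewrite ex ey.
Qed.

Lemma emb_out (S1 S2 : sstr n) (f : sV S1 -> sV S2) : wfs S1 -> wfs S2 ->
  is_emb (A := conv_out S1) (B := conv_out S2) f <-> emb f.
Proof.
move=> [_ _ R1] [_ _ R2]; split.
  case=> i [e [p l]]; have s : forall x, ssrt S2 (f x) = ssrt S1 x.
    by move=> x; move: (p (ssrt S1 x) x) => /=; rewrite eqxx => /eqP.
  split => // x y.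
  move: (e x y); rewrite /= /Eo !s.
  case: (ltngtP (ssrt S1 x) (ssrt S1 y)) => h //=.
    by rewrite !orbF.
  have h1 : sR S1 x y = false by apply/negP => /R1; rewrite ltnNge (ltnW h).
  have h2 : sR S2 (f x) (f y) = false by apply/negP => /R2; rewrite !s ltnNge (ltnW h).
  by rewrite h1 h2.
  have h1 : sR S1 x y = false by apply/negP => /R1; rewrite h ltnn.
  have h2 : sR S2 (f x) (f y) = false by apply/negP => /R2; rewrite !s h ltnn.
  by rewrite h1 h2.
case=> i r s l; split => //; split.
  by move=> x y; rewrite /= /Eo !r !s.
by split => // j x; rewrite /= s.
Qed.

Lemma is_emb_in (A : str n) (S : sstr n) (f : car A -> sV S) : inK A ->
  is_emb (A := A) (B := conv_out S) f <-> is_emb (A := conv_out (conv_in A)) (B := conv_out S) f.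
Proof.
move=> KA; split; case=> i [e [p l]]; split => //; split.
- by move=> x y; rewrite e (E_in KA).
- by split => // j x; rewrite p /= sA_P // eq_sym.
- by move=> x y; rewrite e (E_in KA).
- by split => // j x; rewrite p /= sA_P // eq_sym.
Qed.

End Conv.


Definition rembg n (S : sstr n) (T : finType) (srtD : T -> 'I_n) (ltD : rel T) (f : {ffun sV S -> T}) :=
  [&& injectiveb f, [forall x, srtD (f x) == ssrt S x] & [forall x, forall y, ltD (f x) (f y) == slt S x y]].

Lemma rembgP n (S : sstr n) (T : finType) (srtD : T -> 'I_n) (ltD : rel T) (f : {ffun sV S -> T}) :
  reflect (remb srtD ltD f) (rembg srtD ltD f).
Proof.
apply: (iffP idP).
  case/and3P=> /injectiveP i /forallP s /forallP l; split => //; split.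
    by move=> x; apply/eqP.
  by move=> x y; apply/eqP; move/forallP: (l x) => /(_ y).
case=> i [s l]; apply/and3P; split.
- by apply/injectiveP.
- by apply/forallP=> x; rewrite s.
- by apply/forallP=> x; apply/forallP=> y; rewrite l.
Qed.

Lemma emb_cancel n (A B C : sstr n) (G : sV B -> sV C) (f : sV A -> sV C) (f' : sV A -> sV B) :
  emb G -> emb f -> (forall a, G (f' a) = f a) -> emb f'.
Proof.
case=> gi gr gs gl [fi fr fs fl] e; split.
- by move=> x y h; apply: fi; rewrite -!e h.
- by move=> x y; rewrite -gr !e fr.
- by move=> x; rewrite -gs e fs.
- by move=> x y; rewrite -gl !e fl.
Qed.

Section P0.
Variables (n M : nat) (B : sstr n).
Hypothesis wB : wfs B.
Definition TD0 := ('I_n * 'I_M.+1)%type.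
Definition Bemb := {f : {ffun sV B -> TD0} | rembg (fun p : TD0 => p.1) (@ltDM n M.+1) f}.
Definition V0 := (Bemb * sV B)%type.
Definition pi0 (u : V0) : TD0 := val u.1 u.2.
Definition R0 (u v : V0) := (u.1 == v.1) && sR B u.2 v.2.
Definition w0 (u v : V0) := (enum_rank u.1 < enum_rank v.1) || (u.1 == v.1) && slt B u.2 v.2.
Definition P0 := mkS (fun p : TD0 => p.1) (@ltDM n M.+1) pi0 R0 w0.

Lemma BembP (be : Bemb) : remb (fun p : TD0 => p.1) (@ltDM n M.+1) (val be).
Proof. by case: be => f /= /rembgP. Qed.

Lemma wfP0 : wfp (fun p : TD0 => p.1) (@ltDM n M.+1) (P := P0) pi0.
Proof.
have [[irr tr tot] mon Rs] := wB.
apply: mkS_wf.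
- exact: sto_ltDM.
- by move=> p q h; rewrite /ltDM h.
- by move=> [be b]; rewrite /w0 /= ltnn eqxx irr.
- move=> [b1 x1] [b2 x2] [b3 x3] _ _; rewrite /w0 /=.
  case/orP=> [h1|/andP[/eqP e1 h1]]; case/orP=> [h2|/andP[/eqP e2 h2]]; subst.
  + by rewrite (ltn_trans h1 h2).
  + by rewrite h1.
  + by rewrite h2.
  + by rewrite eqxx (tr _ _ _ h1 h2) orbT.
- move=> [b1 x1] [b2 x2] _ ne; rewrite /w0 /=.
  case: (eqVneq b1 b2) => [e|ne'].
    subst; rewrite ltnn /=; apply: tot; apply: contra ne => /eqP ->; by [].
  have : enum_rank b1 != enum_rank b2 by apply: contra ne' => /eqP /enum_rank_inj ->.
  by rewrite neq_ltn => /orP[] ->; rewrite ?orbT.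
- move=> [b1 x1] [b2 x2]; rewrite /R0 /pi0 /= => /andP[/eqP <- h].
  have [_ [s _]] := BembP b1; rewrite !s; exact: Rs.
Qed.

Lemma e0_emb (be : Bemb) : emb (A := B) (B := P0) (fun b => (be, b)).
Proof.
have [i [s l]] := BembP be.
have [irrD _ _] := sto_ltDM n M.+1.
split.
- by move=> x y [].
- by move=> x y; rewrite /= /R0 /= eqxx.
- by move=> x /=; rewrite /pi0 /= s.
- move=> x y /=; rewrite /pi0 /= l.
  case: (eqVneq (val be x) (val be y)) => [/i ->|] /=; last by move=> _; rewrite orbF.
  by rewrite /w0 /= ltnn eqxx /=; case: (slt B y y).
Qed.

End P0.

Theorem theorem8p3 (n : nat) : (0 < n)%N -> ramsey_property (@inK n).
Proof.
move=> n0 k k0 A B KA KB.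
pose A' := conv_in n0 A; pose B' := conv_in n0 B.
have wA : wfs A' := wfs_in n0 KA.
have wB : wfs B' := wfs_in n0 KB.
case: k k0 => // k _.
have [M HM] := DR 'I_k.+1 wA wB.
have stoD := sto_ltDM n M.+1.
have monD : forall p q : TD0 n M, p.1 < q.1 -> ltDM p q by move=> p q h; rewrite /ltDM h.
pose s := [seq f <- enum {ffun sV A' -> TD0 n M} | rembg (fun p : TD0 n M => p.1) (@ltDM n M.+1) f].
have sinj : forall al, al \in s -> injective al.
  by move=> al; rewrite mem_filter => /andP[/rembgP [i _] _].
have [P2 [piP2 [wP2 H2]]] := main_ind stoD monD 'I_k.+1 sinj (wfP0 M wB).
exists (conv_out P2); split; first by apply: inK_out; case: wP2.
move=> c.
have [h [eh ph mh]] := H2 c.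
pose chi (al : {ffun sV A' -> TD0 n M}) : 'I_k.+1 :=
  if [pick f : {ffun sV A' -> V0 M B'} | emb_b (A := A') (B := P0 M B') f &&
       [forall a, pi0 (f a) == al a]] is Some f then c (img (fun a => h (f a))) else ord0.
have [beta [rb mono]] := HM chi.
have rbb : rembg (fun p : TD0 n M => p.1) (@ltDM n M.+1) [ffun b => beta b].
  apply/rembgP; case: rb => i [sb lb]; split; last split.
  - by move=> x y; rewrite !ffunE => /i.
  - by move=> x; rewrite ffunE sb.
  - by move=> x y; rewrite !ffunE lb.
pose bB : Bemb M B' := exist _ [ffun b => beta b] rbb.
pose G := fun b => h (bB, b).
have eG : emb (A := B') (B := P2) G by apply: emb_comp eh; apply: e0_emb.
have [[_ _ _] _ _] := wP2.
exists (img G); split.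
  exists G; split; last by [].
  apply/(is_emb_in n0 _ KB); apply/emb_out => //; by case: wP2.
pose col : 'I_k.+1 := if [pick g : {ffun sV A' -> sV B'} | rembg (ssrt B') (slt B') g] is Some g
  then chi [ffun x => beta (g x)] else ord0.
exists col => S sub [f [ef fS]].
have ef' : emb (A := A') (B := P2) f.
  by apply/emb_out => //; [by case: wP2 | apply/(is_emb_in n0 _ KA)].
have ex : forall a, exists b, G b == f a.
  move=> a; have : f a \in img G.
    by apply: (subsetP sub); rewrite -fS; apply/imsetP; exists a.
  by case/imsetP=> b _ ->; exists b.
pose f' a := xchoose (ex a).
have Gf' a : G (f' a) = f a by apply/eqP; apply: (xchooseP (ex a)).
have ef'' : emb (A := A') (B := B') f' by apply: (@emb_cancel _ A' B' P2 G f f' eG ef' Gf').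
have rf' : remb (A := A') (ssrt B') (slt B') f'.
  by case: ef'' => i _ sf lf; split => //; split.
pose F := fun a => (bB, f' a).
have eF : emb (A := A') (B := P0 M B') F by apply: emb_comp ef'' _; apply: e0_emb.
pose al := [ffun a => beta (f' a)].
have pF : forall a, pi0 (F a) = al a by move=> a; rewrite /pi0 /= !ffunE.
have als : al \in s.
  rewrite mem_filter mem_enum andbT; apply/rembgP.
  case: rb => i [sb lb]; case: rf' => i' [sf lf]; split; last split.
  - by move=> x y; rewrite !ffunE => /i /i'.
  - by move=> x; rewrite ffunE sb sf.
  - by move=> x y; rewrite !ffunE lb lf.
have cS : c S = c (img (fun a => h (F a))).
  by rewrite -fS; congr c; apply: eq_imset => a; rewrite -Gf'.
have chial : chi al = c (img (fun a => h (F a))).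
  rewrite /chi; case: pickP => [f0 /andP[/emb_bP ef0 /forallP pf0]|none].
    apply: (mh al als) => // a; exact/eqP.
  have : emb_b (A := A') (B := P0 M B') [ffun a => F a] && [forall a, pi0 ([ffun a => F a] a) == al a].
    apply/andP; split.
      by apply/emb_bP; apply: emb_ext eF => a; rewrite ffunE.
    by apply/forallP=> a; rewrite ffunE pF.
  by rewrite none.
rewrite cS -chial /col; case: pickP => [g0 /rembgP rg0|none].
  by apply: mono.
have : rembg (S := A') (ssrt B') (slt B') [ffun a : sV A' => f' a].
  apply/rembgP; case: rf' => i [sf lf]; split; last split.
  - by move=> x y; rewrite !ffunE => /i.
  - by move=> x; rewrite ffunE sf.
  - by move=> x y; rewrite !ffunE lf.
by rewrite none.
Qed.
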